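(* Assume the setting below with $k\ge2$, suppose $\mathcal{S}$ is pseudo-symmetric, and let $(x_0,y_0)\in L$ be the point with $\varphi(x_0,y_0)=g(\mathcal{S})+a$. If $(x_0,y_0)\ne(2,0)$, then either $x_0=0$ or $x_0\equiv1\pmod k$. In particular, $\varphi(x_0,y_0)=\varphi(x_0-x,y_0-y)+\varphi(x,y)$ for all integers $0\le x\le x_0$, $0\le y\le y_0$.
   Context: Setting (AA-semigroups). Let $a,d,k,c$ be positive integers with $\gcd(a,a+d,\ldots,a+kd,c)=1$ and $\gcd(a,d)=1$, and let $\mathcal{S}=\langle a,a+d,\ldots,a+kd,c\rangle$ be the numerical semigroup of non-negative integer combinations of these generators; $g(\mathcal{S})$ is its Frobenius number (largest integer not in $\mathcal{S}$). $\mathcal{S}$ is pseudo-symmetric if $g(\mathcal{S})$ is even and $\mathcal{S}\cup(g(\mathcal{S})-\mathcal{S})=\mathbb{Z}\setminus\{g(\mathcal{S})/2\}$. Put $s_{-1}=a$ and let $s_0$ be the unique integer with $ds_0\equiv c\pmod a$, $0\le s_0<a$. If $s_0=0$ set $m=-1$. Otherwise define $q_{i+1},s_{i+1}$ for $i=0,1,2,\ldots$ by $s_{i-1}=q_{i+1}s_i-s_{i+1}$ with $0\le s_{i+1}<s_i$, and let $m$ be the index with $s_m>0=s_{m+1}$ (so $s_m=\gcd(a,c)$). Define $P_{-1}=0$, $P_0=1$, $P_{i+1}=q_{i+1}P_i-P_{i-1}$ for $i=0,\ldots,m$, and $R_i=\frac1a\big((a+kd)s_i-kcP_i\big)$ for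 $-1\le i\le m+1$; these are integers with $-c/s_m=R_{m+1}<R_m<\cdots<R_0<R_{-1}=a+kd$. Let $v$ be the unique integer with $R_{v+1}\le0<R_v$. Let $L=A\cup B$, where $A=\{(x,y)\in\mathbb{Z}^2:0\le x\le s_v-1,\ 0\le y\le P_{v+1}-P_v-1\}$ and $B=\{(x,y)\in\mathbb{Z}^2:0\le x\le s_v-s_{v+1}-1,\ P_{v+1}-P_v\le y\le P_{v+1}-1\}$. Define $\varphi:\mathbb{Z}^2\to\mathbb{Z}$, $\varphi(x,y)=\lceil x/k\rceil a+xd+yc$. It is known (Rødseth) that $|L|=a$ and $\varphi$ maps $L$ bijectively onto $\mathrm{Ap}(\mathcal{S};a)=\{s\in\mathcal{S}:s-a\notin\mathcal{S}\}$; consequently $g(\mathcal{S})+a=\max\varphi(L)$ is attained at $(s_v-s_{v+1}-1,P_{v+1}-1)$ or at $(s_v-1,P_{v+1}-P_v-1)$. *)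

(* Defs.v *)
From Stdlib Require Import ZArith Lia.
Open Scope Z_scope.

Fixpoint sumZ (f : nat -> Z) (n : nat) : Z :=
  match n with
  | O => f O
  | S n' => sumZ f n' + f n
  end.

Definition inS (a d k c n : Z) : Prop :=
  exists (u : nat -> Z) (w : Z),
    (forall i : nat, (i <= Z.to_nat k)%nat -> 0 <= u i) /\ 0 <= w /\
    n = sumZ (fun i => u i * (a + Z.of_nat i * d)) (Z.to_nat k) + w * c.

Definition gens_coprime (a d k c : Z) : Prop :=
  forall g : Z, 0 < g -> (g | a) ->
    (forall i : Z, 0 <= i <= k -> (g | a + i * d)) -> (g | c) -> g = 1.

Definition is_frobenius (a d k c g : Z) : Prop :=
  ~ inS a d k c g /\ forall n : Z, g < n -> inS a d k c n.

Definition pseudo_symmetric (a d k c : Z) : Prop :=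
  exists g : Z, is_frobenius a d k c g /\ Z.Even g /\
    forall z : Z, (inS a d k c z \/ (exists s, inS a d k c s /\ z = g - s))
                  <-> z <> g / 2.

(* Shifted indexing: seqs a s0 t = (s_{t-1}, s_t, P_{t-1}, P_t).
   Step: q_{t} = ceil(s_{t-2}/s_{t-1}), s_t = q_t s_{t-1} - s_{t-2},
   P_t = q_t P_{t-1} - P_{t-2}.  Once s_{t-1} = 0 (i.e. past index m+1)
   the sequence s is absorbing at 0 (values there are never used). *)
Fixpoint seqs (a s0 : Z) (t : nat) : Z * Z * Z * Z :=
  match t with
  | O => (a, s0, 0, 1)
  | S t' =>
      let '(x, y, p, r) := seqs a s0 t' in
      if y =? 0 then (0, 0, r, 0)
      else let q := - ((- x) / y) in (y, q * y - x, r, q * r - p)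
  end.

(* sig a s0 t = s_{t-1};  Pi a s0 t = P_{t-1} *)
Definition sig (a s0 : Z) (t : nat) : Z :=
  let '(x, _, _, _) := seqs a s0 t in x.
Definition Pi (a s0 : Z) (t : nat) : Z :=
  let '(_, _, p, _) := seqs a s0 t in p.

(* Rf t = R_{t-1} = ((a+kd) s_{t-1} - k c P_{t-1}) / a *)
Definition Rf (a d k c s0 : Z) (t : nat) : Z :=
  ((a + k * d) * sig a s0 t - k * c * Pi a s0 t) / a.

(* t = v + 1 where v is the index with R_{v+1} <= 0 < R_v, -1 <= v <= m
   (v <= m is expressed as s_v > 0) *)
Definition is_v (a d k c s0 : Z) (t : nat) : Prop :=
  0 < sig a s0 t /\ Rf a d k c s0 (S t) <= 0 < Rf a d k c s0 t.

(* (x,y) ∈ L = A ∪ B, with s_v = sig t, s_{v+1} = sig (t+1),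
   P_v = Pi t, P_{v+1} = Pi (t+1) *)
Definition inL (a s0 : Z) (t : nat) (x y : Z) : Prop :=
  let sv := sig a s0 t in let sv1 := sig a s0 (S t) in
  let Pv := Pi a s0 t in let Pv1 := Pi a s0 (S t) in
  (0 <= x <= sv - 1 /\ 0 <= y <= Pv1 - Pv - 1) \/
  (0 <= x <= sv - sv1 - 1 /\ Pv1 - Pv <= y <= Pv1 - 1).

Definition ceil_div (x k : Z) : Z := - ((- x) / k).

Definition phi (a d k c x y : Z) : Z := ceil_div x k * a + x * d + y * c.

(* Main.v *)
Require Import Defs.
From Stdlib Require Import ZArith Lia.
Open Scope Z_scope.

Lemma ceil_spec x k : 0 < k -> k * ceil_div x k - k < x <= k * ceil_div x k.
Proof.
  intros Hk. unfold ceil_div.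
  pose proof (Z.div_mod (-x) k ltac:(lia)).
  pose proof (Z.mod_pos_bound (-x) k Hk). nia.
Qed.

Lemma ceil_unique x k C : 0 < k -> k * C - k < x <= k * C -> ceil_div x k = C.
Proof.
  intros Hk H. pose proof (ceil_spec x k Hk). nia.
Qed.

Definition Inv (a s0 : Z) (q : Z*Z*Z*Z) : Prop :=
  let '(x,y,p,r) := q in
  (a | x - s0*p) /\ (a | y - s0*r) /\ x*r - y*p = a /\ 0 <= y < x /\ 0 <= p < r.

Lemma seqs_inv a s0 : 0 <= s0 < a -> forall t,
  Inv a s0 (seqs a s0 t) \/ exists r, seqs a s0 t = (0,0,r,0).
Proof.
  intros Hs t. induction t as [|t IH].
  - left. simpl. split; [exists 1; ring|]. split; [exists 0; ring|]. lia.
  - simpl. destruct (seqs a s0 t) as [[[x y] p] r].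
    destruct IH as [IH | [r' E]].
    + destruct (y =? 0) eqn:Ey.
      * right. exists r. reflexivity.
      * left. apply Z.eqb_neq in Ey.
        destruct IH as (H1 & H2 & H3 & H4 & H5).
        pose proof (ceil_spec x y ltac:(lia)) as Hc. unfold ceil_div in Hc.
        set (q := - (- x / y)) in *.
        assert (q >= 2) by nia.
        repeat split.
        -- exact H2.
        -- replace (q * y - x - s0 * (q * r - p)) with (q * (y - s0*r) - (x - s0*p)) by ring.
           apply Z.divide_sub_r; [apply Z.divide_mul_r|]; assumption.
        -- nia.
        -- lia.
        -- lia.
        -- lia.
        -- nia.
    + inversion E; subst. right. exists 0. reflexivity.
Qed.

Lemma seq_data a s0 t : 0 <= s0 < a -> 0 < sig a s0 t ->
  exists x y p r, Inv a s0 (x,y,p,r) /\ sig a s0 t = x /\ Pi a s0 t = p /\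
    sig a s0 (S t) = y /\ Pi a s0 (S t) = r.
Proof.
  intros Hs Hp. destruct (seqs_inv a s0 Hs t) as [H | [r E]].
  - unfold sig, Pi in *. simpl.
    destruct (seqs a s0 t) as [[[x y] p] r] eqn:E.
    exists x, y, p, r. split; [exact H|]. split; [reflexivity|]. split; [reflexivity|].
    destruct (y =? 0) eqn:Ey.
    + apply Z.eqb_eq in Ey. subst. auto.
    + auto.
  - unfold sig in Hp. rewrite E in Hp. lia.
Qed.

Lemma sign_lemma x y p r x' y' al be :
  0 <= y < x -> 0 <= p < r ->
  ((0 <= x' <= x - 1 /\ 0 <= y' <= r - p - 1) \/
   (0 <= x' <= x - y - 1 /\ r - p <= y' <= r - 1)) ->
  0 <= x' + al * x + be * y -> 0 <= y' - al * p - be * r ->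
  0 <= al /\ be <= 0.
Proof.
  intros Hxy Hpr HL HX HY.
  assert (Hb : be <= 0).
  { destruct (Z_le_gt_dec be 0) as [|Hb]; [assumption|exfalso].
    destruct (Z_le_gt_dec 0 al) as [Ha|Ha].
    - assert (al * p >= 0) by nia. assert (be * r >= r) by nia. lia.
    - destruct (Z.eq_dec al al) as [_|]; [|lia]. assert (exists A, al = - A) as [A ->] by (exists (-al); lia).
      assert (Hy : y > 0) by nia.
      assert (be * y > (A - 1) * x) by nia.
      assert (be >= A) by nia.
      assert (y' >= A * (r - p)) by nia.
      assert (y' >= r - p) by nia.
      assert (x' <= x - y - 1 /\ y' <= r - 1) by lia.
      assert (be <= A) by nia.
      assert (be = A) by lia. subst be. nia. }
  split; [|exact Hb].
  destruct (Z_le_gt_dec 0 al) as [|Ha]; [assumption|exfalso].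
  nia.
Qed.

Lemma minimality a d k c s0 x y p r mv mv1 x' y' N X Y :
  0 < a -> 0 < k -> Z.gcd a d = 1 -> (a | d * s0 - c) ->
  (a | x - s0*p) -> (a | y - s0*r) -> x*r - y*p = a ->
  0 <= y < x -> 0 <= p < r ->
  d*x - c*p = mv*a -> d*y - c*r = mv1*a -> y + k*mv1 <= 0 < x + k*mv ->
  ((0 <= x' <= x - 1 /\ 0 <= y' <= r - p - 1) \/
   (0 <= x' <= x - y - 1 /\ r - p <= y' <= r - 1)) ->
  0 <= N -> 0 <= X <= k * N -> 0 <= Y ->
  N * a + X * d + Y * c = ceil_div x' k * a + x' * d + y' * c - a -> False.
Proof.
  intros Ha Hk Hg Hs Hx Hy Hdet Hxy Hpr Hm Hm1 HR HL HN HX HY Heq.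
  set (C := ceil_div x' k) in *.
  pose proof (ceil_spec x' k Hk) as Hc. fold C in Hc.
  set (u := X - x'). set (v := Y - y').
  assert (Huv : u*d + v*c = (C - N - 1) * a) by (unfold u, v; lia).
  assert (Hw : (a | d * (u + v*s0))).
  { replace (d * (u + v*s0)) with ((u*d + v*c) + v * (d*s0 - c)) by ring.
    rewrite Huv. apply Z.divide_add_r; [apply Z.divide_factor_r| apply Z.divide_mul_r; exact Hs]. }
  apply Z.gauss in Hw; [|exact Hg].
  destruct Hw as [w Hw]. destruct Hy as [e1 He1]. destruct Hx as [e2 He2].
  set (al := r*w + v*e1). set (be := - (p*w + v*e2)).
  assert (Hal : a * al = u*r + v*y).
  { unfold al. replace y with (s0*r + e1*a) by lia.
    replace u with (w*a - v*s0) by lia. ring. }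
  assert (Hbe : a * be = - (u*p + v*x)).
  { unfold be. replace x with (s0*p + e2*a) by lia.
    replace u with (w*a - v*s0) by lia. ring. }
  assert (Hu : u = al*x + be*y).
  { apply (Z.mul_reg_l _ _ a); [lia|].
    replace (a * (al*x + be*y)) with ((a*al)*x + (a*be)*y) by ring.
    rewrite Hal, Hbe. rewrite <- Hdet. ring. }
  assert (Hv : v = - al*p - be*r).
  { apply (Z.mul_reg_l _ _ a); [lia|].
    replace (a * (- al*p - be*r)) with (-(a*al)*p - (a*be)*r) by ring.
    rewrite Hal, Hbe. rewrite <- Hdet. ring. }
  destruct (sign_lemma x y p r x' y' al be Hxy Hpr HL) as [Hag Hbg].
  { unfold u in Hu. lia. }
  { unfold v in Hv. lia. }
  assert (Hud : u*d + v*c = (al*mv + be*mv1) * a).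
  { rewrite Hu, Hv. replace ((al * x + be * y) * d + (- al * p - be * r) * c)
      with (al * (d*x - c*p) + be * (d*y - c*r)) by ring. rewrite Hm, Hm1. ring. }
  assert (Hbr : C - N - 1 = al*mv + be*mv1).
  { apply (Z.mul_reg_r _ _ a); [lia|]. lia. }
  assert (0 <= al * (x + k*mv)) by (apply Z.mul_nonneg_nonneg; lia).
  assert (0 <= be * (y + k*mv1)) by (apply Z.mul_nonpos_nonpos; lia).
  assert (E : k*(C - N - 1) = k*(al*mv + be*mv1)) by (rewrite Hbr; reflexivity).
  assert (E2 : k*(al*mv + be*mv1) = al * (x + k*mv) + be * (y + k*mv1) - u) by (rewrite Hu; ring).
  unfold u in E2. lia.
Qed.

Lemma sumZ_add (f g : nat -> Z) n : sumZ (fun i => f i + g i) n = sumZ f n + sumZ g n.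
Proof. induction n; simpl; [|rewrite IHn]; ring. Qed.

Lemma sumZ_ext (f g : nat -> Z) n : (forall i, f i = g i) -> sumZ f n = sumZ g n.
Proof. intros H. induction n; simpl; rewrite ?IHn, ?H; reflexivity. Qed.

Lemma sumZ_0 n : sumZ (fun _ => 0) n = 0.
Proof. induction n; simpl; [|rewrite IHn]; ring. Qed.

Lemma sumZ_ind0 (e : nat -> Z) n : sumZ (fun i => (if Nat.eqb i 0 then 1 else 0) * e i) n = e O.
Proof. induction n; cbn [sumZ Nat.eqb]; [ring|]. rewrite IHn. ring. Qed.

Lemma inS_add a d k c n1 n2 : inS a d k c n1 -> inS a d k c n2 -> inS a d k c (n1 + n2).
Proof.
  intros (u1 & w1 & H1 & H2 & H3) (u2 & w2 & H4 & H5 & H6).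
  exists (fun i => u1 i + u2 i), (w1 + w2). split; [intros i Hi; specialize (H1 i Hi); specialize (H4 i Hi); lia|].
  split; [lia|]. rewrite H3, H6.
  rewrite (sumZ_ext (fun i => (u1 i + u2 i) * (a + Z.of_nat i * d))
     (fun i => u1 i * (a + Z.of_nat i * d) + u2 i * (a + Z.of_nat i * d))) by (intros; cbv beta; ring).
  rewrite sumZ_add. ring.
Qed.

Lemma inS_0 a d k c : inS a d k c 0.
Proof.
  exists (fun _ => 0), 0. split; [intros; lia|]. split; [lia|].
  rewrite (sumZ_ext _ (fun _ => 0)) by (intros; cbv beta; ring). rewrite sumZ_0. ring.
Qed.

Lemma inS_a a d k c : inS a d k c a.
Proof.
  exists (fun i => if Nat.eqb i 0 then 1 else 0), 0. split.
  { intros i _. destruct (Nat.eqb i 0); lia. }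
  split; [lia|]. rewrite sumZ_ind0. simpl. ring.
Qed.

Lemma inS_c a d k c : inS a d k c c.
Proof.
  exists (fun _ => 0), 1. split; [intros; lia|]. split; [lia|].
  rewrite (sumZ_ext _ (fun _ => 0)) by (intros; cbv beta; ring). rewrite sumZ_0. ring.
Qed.

Lemma inS_mul a d k c n z : 0 <= n -> inS a d k c z -> inS a d k c (n * z).
Proof.
  intros Hn Hz. pattern n. apply natlike_ind; [| |exact Hn].
  - rewrite Z.mul_0_l. apply inS_0.
  - intros m Hm IH. replace (Z.succ m * z) with (m*z + z) by ring. apply inS_add; assumption.
Qed.

Lemma inS_repr a d k c n : 0 <= k -> inS a d k c n ->
  exists N X Y, 0 <= N /\ 0 <= X <= k * N /\ 0 <= Y /\ n = N*a + X*d + Y*c.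
Proof.
  intros Hk (u & w & Hu & Hw & Hn).
  assert (forall m, (m <= Z.to_nat k)%nat ->
    exists N X, 0 <= N /\ 0 <= X <= k * N /\
      sumZ (fun i => u i * (a + Z.of_nat i * d)) m = N*a + X*d) as Hm.
  { induction m as [|m IH]; intros Hm.
    - exists (u O), 0. specialize (Hu O Hm). cbn [sumZ]. split; [lia|]. split; [lia|]. ring.
    - destruct IH as (N & X & H1 & H2 & H3); [lia|].
      specialize (Hu (S m) Hm).
      exists (N + u (S m)), (X + Z.of_nat (S m) * u (S m)).
      assert (Z.of_nat (S m) <= k) by lia.
      split; [lia|]. split; [assert (Z.of_nat (S m) * u (S m) <= k * u (S m)) by (apply Z.mul_le_mono_nonneg_r; lia); lia|]. cbn [sumZ]. rewrite H3. ring. }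
  destruct (Hm (Z.to_nat k) (le_n _)) as (N & X & H1 & H2 & H3).
  exists N, X, w. split; [lia|]. split; [lia|]. split; [lia|]. rewrite Hn, H3. ring.
Qed.

Lemma additive a d k c x0 y0 : 2 <= k -> 0 <= x0 ->
  (x0 = 0 \/ x0 mod k = 1 mod k) ->
  forall x y : Z, 0 <= x <= x0 -> 0 <= y <= y0 ->
     phi a d k c x0 y0 = phi a d k c (x0 - x) (y0 - y) + phi a d k c x y.
Proof.
  intros Hk Hx0 H x y Hx Hy. unfold phi.
  assert (E : ceil_div x0 k = ceil_div (x0 - x) k + ceil_div x k).
  { pose proof (ceil_spec x k ltac:(lia)). pose proof (ceil_spec (x0 - x) k ltac:(lia)).
    pose proof (ceil_spec x0 k ltac:(lia)).
    destruct H as [->|H].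
    - assert (x = 0) by lia. subst. replace (0-0) with 0 by ring.
      rewrite !(ceil_unique 0 k 0) by lia. ring.
    - rewrite (Z.mod_small 1 k) in H by lia.
      pose proof (Z.div_mod x0 k ltac:(lia)). rewrite H in *.
      set (q := x0 / k) in *. set (C1 := ceil_div x k) in *. set (C2 := ceil_div (x0 - x) k) in *.
      apply ceil_unique; [lia|].
      assert (C1 + C2 >= q + 1) by nia.
      assert (C1 + C2 <= q + 1) by nia.
      nia. }
  rewrite E. ring.
Qed.

Theorem lemma6 (a d k c s0 : Z) (t : nat) (g x0 y0 : Z) :
  0 < a -> 0 < d -> 2 <= k -> 0 < c ->
  gens_coprime a d k c -> Z.gcd a d = 1 ->
  0 <= s0 < a -> (a | d * s0 - c) ->
  is_v a d k c s0 t ->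
  is_frobenius a d k c g ->
  pseudo_symmetric a d k c ->
  inL a s0 t x0 y0 ->
  phi a d k c x0 y0 = g + a ->
  (x0, y0) <> (2, 0) ->
  (x0 = 0 \/ x0 mod k = 1 mod k) /\
  (forall x y : Z, 0 <= x <= x0 -> 0 <= y <= y0 ->
     phi a d k c x0 y0 = phi a d k c (x0 - x) (y0 - y) + phi a d k c x y).
Proof.
  intros Ha Hd Hk Hc _ Hg Hs0 Hds Hv Hfr Hps HL Hphi H20.
  destruct Hv as [Hsig HR].
  destruct (seq_data a s0 t Hs0 Hsig) as (x & y & p & r & Hinv & E1 & E2 & E3 & E4).
  destruct Hinv as (Hx & Hy & Hdet & Hxy & Hpr).
  unfold inL in HL. cbv zeta in HL. rewrite E1, E2, E3, E4 in HL.
  assert (Hx0 : 0 <= x0) by lia. assert (Hy0 : 0 <= y0) by lia.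
  assert (first : x0 = 0 \/ x0 mod k = 1 mod k).
  { destruct (Z.eq_dec x0 0) as [|Hn0]; [left; assumption|].
    destruct (Z.eq_dec (x0 mod k) (1 mod k)) as [|Hn1]; [right; assumption|].
    exfalso.
    destruct Hps as (g' & Hfr' & Hev & Hps).
    assert (g' = g).
    { destruct Hfr as [Hg1 Hg2]. destruct Hfr' as [Hg1' Hg2'].
      destruct (Z.lt_total g g') as [Hl|[Hl|Hl]]; [exfalso; apply Hg1'; apply Hg2; exact Hl|exact (eq_sym Hl)|].
      exfalso; apply Hg1; apply Hg2'; exact Hl. }
    subst g'.
    destruct Hfr as [HgS _].
    set (C0 := ceil_div x0 k) in *.
    pose proof (ceil_spec x0 k ltac:(lia)) as HC. fold C0 in HC.
    assert (HC1 : ceil_div (x0 - 1) k = C0).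
    { apply ceil_unique; [lia|]. split; [|lia].
      destruct (Z.eq_dec x0 (k*C0 - k + 1)) as [He|]; [|lia].
      exfalso. apply Hn1. rewrite He.
      replace (k * C0 - k + 1) with (1 + (C0 - 1) * k) by ring.
      apply Z.mod_add. lia. }
    unfold phi in Hphi. fold C0 in Hphi.
    assert (HC0 : 1 <= C0) by nia.
    destruct (Z.eq_dec d (g / 2)) as [Hd2|Hd2].
    - destruct Hev as [m Hm]. subst g.
      rewrite (Z.mul_comm 2 m), Z.div_mul in Hd2 by lia. subst m.
      assert (x0 <> 1).
      { intro He. apply Hn1. rewrite He. reflexivity. }
      apply H20. f_equal; nia.
    - apply Hps in Hd2. destruct Hd2 as [HdS | (s & HsS & Hseq)].
      + apply HgS.
        replace g with ((C0 - 1) * a + x0 * d + y0 * c) by lia.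
        apply inS_add; [apply inS_add|]; apply inS_mul; try lia.
        * apply inS_a.
        * exact HdS.
        * apply inS_c.
      + destruct (inS_repr a d k c s ltac:(lia) HsS) as (N & X & Y & HN & HX & HY & Hsr).
        pose proof Hx as [e2 He2].
        assert (Hm : (a | d*x - c*p)).
        { replace (d*x - c*p) with (d*(x - s0*p) + p*(d*s0 - c)) by ring.
          apply Z.divide_add_r; [apply Z.divide_mul_r; exists e2; exact He2|apply Z.divide_mul_r; exact Hds]. }
        assert (Hm1 : (a | d*y - c*r)).
        { replace (d*y - c*r) with (d*(y - s0*r) + r*(d*s0 - c)) by ring.
          apply Z.divide_add_r; apply Z.divide_mul_r; assumption. }
        destruct Hm as [mv Hmv]. destruct Hm1 as [mv1 Hmv1].
        unfold Rf in HR. rewrite E1, E2, E3, E4 in HR.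
        replace ((a + k * d) * x - k * c * p) with ((x + k*mv) * a) in HR by nia.
        replace ((a + k * d) * y - k * c * r) with ((y + k*mv1) * a) in HR by nia.
        rewrite !Z.div_mul in HR by lia.
        apply (minimality a d k c s0 x y p r mv mv1 (x0 - 1) y0 N X Y); try assumption.
        * lia.
        * lia.
        * rewrite HC1. lia. }
  split; [exact first|].
  apply additive; assumption.
Qed.
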